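(* Let $K$ be a field containing a primitive $n$-th root of unity $\zeta$ with $\zeta^2\ne1$, let $0\ne x\in K$, let $L\supseteq K$ be a field, and let $\mathcal J_x=\mathcal J_x(1)$. For $b,c\in L$ with $bc=x$ let $\mathtt P(b,c)=L\boldsymbol u$ be the one-dimensional $\mathcal J_x\otimes_KL$-module with $\underline e_0\boldsymbol u=0$, $\underline e_1\boldsymbol u=b\boldsymbol u$, $\underline e_2\boldsymbol u=c\boldsymbol u$. Then for $b,c,e,f\in L$ with $bc=ef=x$, $$\mathrm{Ext}^1_{\mathcal J_x\otimes L}\big(\mathtt P(b,c),\mathtt P(e,f)\big)\cong\begin{cases}L,& b=\zeta e\text{ and } f=\zeta c,\\ L,& b=\zeta^2e\text{ and } f=\zeta^2c,\\ L,& b=e\text{ and } c=f,\\ 0,&\text{otherwise.}\end{cases}$$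
   Context: $\mathcal J_x(1)$ is the $K$-algebra generated by $\underline e_0,\underline e_1,\underline e_2$ subject to $\underline e_0\underline e_1=\zeta\underline e_1\underline e_0$, $\underline e_2\underline e_0=\zeta\underline e_0\underline e_2$, $\underline e_2\underline e_1-\zeta^2\underline e_1\underline e_2=x\underline e_0+x(1-\zeta^2)$. The relations force $bc=x$ for a one-dimensional module on which $\underline e_0$ acts by zero. $\mathrm{Ext}^1$ is computed over $\mathcal J_x\otimes_KL$ (equivalently as $L$-linear Hochschild cohomology $\mathrm{Der}(\mathcal J_x,\mathrm{Hom}_L(M_1,M_2))/\{\text{inner derivations}\}$). *)

(* Defs.v *)
From HB Require Import structures.
From mathcomp Require Import all_boot all_order all_algebra.
Set Implicit Arguments. Unset Strict Implicit. Unset Printing Implicit Defensive.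
Import GRing.Theory.
Local Open Scope ring_scope.

(* A module over J_x (x) L on L^m: matrices (A0,A1,A2) for e0,e1,e2 satisfying
   the defining relations of J_x(1), with zeta and x read in L. *)
Definition is_Jrep (L : fieldType) (zeta x : L) (m : nat)
  (A0 A1 A2 : 'M[L]_m) : Prop :=
  [/\ A0 *m A1 = zeta *: (A1 *m A0),
      A2 *m A0 = zeta *: (A0 *m A2) &
      A2 *m A1 - zeta ^+ 2 *: (A1 *m A2) = x *: A0 + (x * (1 - zeta ^+ 2)) *: 1%:M].

Definition utri (L : fieldType) (a t d : L) : 'M[L]_2 :=
  \matrix_(i < 2, j < 2)
    if (i : nat) == 0%N then (if (j : nat) == 0%N then a else t)
    else (if (j : nat) == 0%N then 0 else d).

(* Extensions 0 -> P(e,f) -> E -> P(b,c) -> 0 with E = L^2, P(e,f) = first line.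
   Generator e_k acts on E by utri (chi2 e_k) t_k (chi1 e_k), where
   chi1 = (0,b,c) is the character of P(b,c), chi2 = (0,e,f) that of P(e,f).
   The triple (t0,t1,t2) is the cocycle (= derivation J -> Hom_L(P(b,c),P(e,f))
   on generators). *)
Definition ext_cocycle (L : fieldType) (zeta x b c e f t0 t1 t2 : L) : Prop :=
  is_Jrep zeta x (utri 0 t0 0) (utri e t1 b) (utri f t2 c).

(* inner derivations / split extensions:  t_k = lam * chi1(e_k) - chi2(e_k) * lam *)
Definition ext_coboundary (L : fieldType) (b c e f t0 t1 t2 : L) : Prop :=
  exists lam : L, [/\ t0 = lam * 0 - 0 * lam, t1 = lam * b - e * lam
                    & t2 = lam * c - f * lam].

(* Ext^1 = cocycles / coboundaries is isomorphic to L (one-dimensional over L) *)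
Definition Ext1_iso_L (L : fieldType) (zeta x b c e f : L) : Prop :=
  exists z0 z1 z2 : L,
    [/\ ext_cocycle zeta x b c e f z0 z1 z2,
        ~ ext_coboundary b c e f z0 z1 z2 &
        forall t0 t1 t2, ext_cocycle zeta x b c e f t0 t1 t2 ->
          exists a : L, ext_coboundary b c e f (t0 - a * z0) (t1 - a * z1) (t2 - a * z2)].

Definition Ext1_zero (L : fieldType) (zeta x b c e f : L) : Prop :=
  forall t0 t1 t2, ext_cocycle zeta x b c e f t0 t1 t2 ->
    ext_coboundary b c e f t0 t1 t2.

(* Main.v *)
Set Warnings "-all".
Require Import Defs.
From HB Require Import structures.
From mathcomp Require Import all_boot all_order all_algebra ring.
Import GRing.Theory.
Local Open Scope ring_scope.

Lemma cocycleP (L : fieldType) (z x b c e f t0 t1 t2 : L) :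
  b * c = x -> e * f = x ->
  ext_cocycle z x b c e f t0 t1 t2 <->
  [/\ t0 * (b - z * e) = 0, t0 * (f - z * c) = 0 &
      t1 * (f - z ^+ 2 * c) + t2 * (b - z ^+ 2 * e) = x * t0].
Proof.
move=> hbc hef; split.
  case=> H1 H2 H3.
  move/matrixP: H1 => /(_ 0 1); move/matrixP: H2 => /(_ 0 1);
  move/matrixP: H3 => /(_ 0 1).
  rewrite !mxE !big_ord_recl !big_ord0 !mxE /= => H3 H2 H1.
  rewrite !(mul0r,mulr0,addr0,add0r) in H1 H2 H3.
  split.
  - by transitivity (t0*b - z*(e*t0)); [ring | rewrite H1 subrr].
  - by transitivity (f*t0 - z*(t0*c)); [ring | rewrite H2 subrr].
  - by rewrite -H3; ring.
case=> H1 H2 H3; split; apply/matrixP => i j;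
  rewrite !mxE !big_ord_recl !big_ord0 !mxE;
  case: i => [[|[|?]] Hi] //; case: j => [[|[|?]] Hj] //=; rewrite ?mxE /=.
all: rewrite ?(mul0r,mulr0,addr0,add0r,mulr1); apply/eqP; rewrite -subr_eq0; apply/eqP.
all: first [by ring | by rewrite -[RHS]H1; ring | by rewrite -[RHS]H2; ring
  | by rewrite -hef; ring | by rewrite -hbc; ring | by rewrite -H3; ring].
Qed.

Ltac nz := repeat (apply/andP; split); match goal with H : _ |- _ => exact: H end.

Theorem proposition6p1 (K L : fieldType) (iota : {rmorphism K -> L})
  (n : nat) (zeta x : K) (b c e f : L) :
  n.-primitive_root zeta -> zeta ^+ 2 != 1 -> x != 0 ->
  b * c = iota x -> e * f = iota x ->
  let z := iota zeta in
  let xL := iota x in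
  ((b = z * e /\ f = z * c) \/ (b = z ^+ 2 * e /\ f = z ^+ 2 * c) \/ (b = e /\ c = f)
     -> Ext1_iso_L z xL b c e f) /\
  (~ ((b = z * e /\ f = z * c) \/ (b = z ^+ 2 * e /\ f = z ^+ 2 * c) \/ (b = e /\ c = f))
     -> Ext1_zero z xL b c e f).
Proof.
move=> prim hz2 hx hbc hef z xL; rewrite -/xL in hbc hef.
have hzeta0 : zeta != 0.
  apply/negP => /eqP hz; move: (prim_expr_order prim).
  by rewrite hz expr0n eqn0Ngt (prim_order_gt0 prim) /= => /eqP; rewrite eq_sym oner_eq0.
have hz0 : z != 0 by rewrite /z fmorph_eq0.
have hzn : z ^+ 2 != 1 by rewrite /z -rmorphXn fmorph_eq1.
have hz1 : z != 1 by apply: contra hzn => /eqP->; rewrite expr1n.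
have hz1' : z - 1 != 0 by rewrite subr_eq0.
have hzn' : 1 - z ^+ 2 != 0 by rewrite subr_eq0 eq_sym.
have hxL : xL != 0 by rewrite /xL fmorph_eq0.
have hb0 : b != 0 by apply: contra hxL => /eqP hb; rewrite -hbc hb mul0r.
have hc0 : c != 0 by apply: contra hxL => /eqP hc; rewrite -hbc hc mulr0.
have he0 : e != 0 by apply: contra hxL => /eqP he; rewrite -hef he mul0r.
have hf0 : f != 0 by apply: contra hxL => /eqP hf; rewrite -hef hf mulr0.
have hzz : z - z ^+ 2 != 0.
  by rewrite (_ : z - z^+2 = z*(1-z)); [rewrite mulf_neq0 // subr_eq0 eq_sym | ring].
split.
- case=> [[hb hf]|[[hb hf]|[hb hc]]].
  + exists (c * (z - z ^+ 2) / xL), 1, 0; split.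
    * apply/cocycleP => //; rewrite hb hf; split; [ring | ring | field; exact: hxL].
    * case=> lam [h0 _ _]; move: h0; rewrite mulr0 mul0r subrr; apply/eqP.
      by rewrite !mulf_neq0 ?invr_eq0.
    * have hze : z*e - z^+2*e != 0 by rewrite -mulrBl mulf_neq0.
      move=> t0 t1 t2 /cocycleP [] // _ _; rewrite hb hf => H3.
      have ht2 : t2 = (t1*(z*c - z^+2*c) + t2*(z*e - z^+2*e) - t1*(z*c - z^+2*c))/(z*e - z^+2*e).
        by field; exact: hze.
      rewrite H3 in ht2.
      exists (t0 * xL / (c*(z - z^+2))), ((t1 - t0 * xL / (c*(z - z^+2)))/(e*(z-1))).
      by rewrite ht2; split; field; nz.
  + exists 0, 1, 0; split.
    * by apply/cocycleP => //; rewrite hb hf; split; ring.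
    * case=> lam [_ h1 h2].
      have : lam * (c * (1 - z ^+ 2)) = 0 by rewrite h2 hf; ring.
      move/eqP; rewrite !mulf_eq0 (negbTE hc0) (negbTE hzn') !orbF => /eqP hl.
      by move: h1; rewrite hl mul0r mulr0 subr0 => /eqP; rewrite oner_eq0.
    * move=> t0 t1 t2 /cocycleP [] // H1 _ _; rewrite hb in H1.
      have hz' : t0 * (z^+2*e - z*e) = t0 * (z*e*(z-1)) by ring.
      rewrite hz' in H1.
      move/eqP: H1; rewrite !mulf_eq0 (negbTE hz0) (negbTE he0) (negbTE hz1') !orbF => /eqP ht0.
      exists (t1 + t2*e/c), (t2/(c*(1-z^+2))).
      by rewrite ht0 hb hf; split; field; nz.
  + have hez : e - z*e != 0 by rewrite (_ : e - z*e = e*(1-z)) ?mulf_neq0 // ?subr_eq0 1?eq_sym //; ring.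
    have hez2 : e - z^+2*e != 0 by rewrite (_ : e - z^+2*e = e*(1-z^+2)) ?mulf_neq0 //; ring.
    exists 0, e, (-c); split.
    * by apply/cocycleP => //; rewrite hb -hc; split; ring.
    * case=> lam [_ h1 _]; move: h1; rewrite hb => h1.
      have : e = 0 by rewrite {1}h1; ring.
      by move/eqP; rewrite (negbTE he0).
    * move=> t0 t1 t2 /cocycleP [] // H1 _ H3; rewrite hb -hc in H1 H3.
      move/eqP: H1; rewrite mulf_eq0 (negbTE hez) orbF => /eqP ht0.
      have ht2 : t2 = (t1*(c - z^+2*c) + t2*(e - z^+2*e) - t1*(c - z^+2*c))/(e - z^+2*e).
        by field; nz.
      rewrite H3 ht0 in ht2.
      exists (t1/e), 0.
      by rewrite ht0 ht2 hb -hc; split; field; nz.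
- move=> hn t0 t1 t2 /cocycleP [] // H1 _ H3.
  have hbz : b - z*e != 0.
    apply/eqP => hb'; apply: hn; left.
    have hb : b = z*e by apply/eqP; rewrite -subr_eq0 hb'.
    split => //; apply: (mulfI he0); rewrite hef -hbc hb; ring.
  have hbz2 : b - z^+2*e != 0.
    apply/eqP => hb'; apply: hn; right; left.
    have hb : b = z^+2*e by apply/eqP; rewrite -subr_eq0 hb'.
    split => //; apply: (mulfI he0); rewrite hef -hbc hb; ring.
  have hbe : b - e != 0.
    apply/eqP => hb'; apply: hn; right; right.
    have hb : b = e by apply/eqP; rewrite -subr_eq0 hb'.
    split => //; apply: (mulfI hb0); rewrite hbc -hef hb; ring.
  move/eqP: H1; rewrite mulf_eq0 (negbTE hbz) orbF => /eqP ht0.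
  have hc : c = xL / b by rewrite -hbc; field; nz.
  have hf : f = xL / e by rewrite -hef; field; nz.
  rewrite hc hf ht0 in H3.
  have ht2 : t2 = (t1*(xL/e - z^+2*(xL/b)) + t2*(b - z^+2*e) - t1*(xL/e - z^+2*(xL/b)))/(b - z^+2*e).
    by field; nz.
  rewrite H3 in ht2.
  exists (t1/(b-e)).
  by rewrite ht0 ht2 hc hf; split; field; nz.
Qed.
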